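(* Let $n$ be a nonnegative integer and $\delta\in\{1,2\}$. Suppose there exist a nonnegative integer $B$ and integers $x,y,z$ such that $$\frac{2n+(3\delta+4)B}{3}-(3\delta+4)B^2=x^2+2y^2+3\delta z^2+(x+2y+3\delta z)^2<(B+1)^2.$$ Then there exist nonnegative integers $w_0,x_0,y_0,z_0$ with $n=p_5(w_0)+p_5(x_0)+2p_5(y_0)+3\delta\, p_5(z_0)$.
   Context: For $k\in\mathbb{Z}$, $p_5(k)=k(3k-1)/2$. *)

(* Defs.v *)
From Stdlib Require Import ZArith QArith.
Open Scope Z_scope.
(* pentagonal numbers p_5(k) = k(3k-1)/2 ; k(3k-1) is always even *)
Definition p5 (k : Z) : Z := k * (3 * k - 1) / 2.

(* Main.v *)
Require Import Defs.
From Stdlib Require Import ZArith QArith Lia Psatz.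
Open Scope Z_scope.

Lemma p5_two (k : Z) : 2 * p5 k = k * (3 * k - 1).
Proof.
  unfold p5.
  assert (E : exists q, k * (3 * k - 1) = q * 2).
  { destruct (Zeven_odd_dec k) as [Hj|Hj]; [apply Zeven_ex in Hj|apply Zodd_ex in Hj]; destruct Hj as [j Hj]; subst.
    - exists (j * (6 * j - 1)); ring.
    - exists ((2 * j + 1) * (3 * j + 1)); ring. }
  destruct E as [q Hq]; rewrite Hq, Z.div_mul by lia; ring.
Qed.

Lemma bnd (t B : Z) : 0 <= B -> t ^ 2 < (B + 1) ^ 2 -> 0 <= B + t.
Proof. intros HB H. destruct (Z_lt_le_dec (B + t) 0); [|lia].
  assert (B + 1 <= - t) by lia.
  assert ((B+1)*(B+1) <= (-t)*(-t)) by (apply Z.mul_le_mono_nonneg; lia).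
  rewrite !Z.pow_2_r in H. lia. Qed.

Lemma qconv a b S : ((inject_Z a / inject_Z 3 - inject_Z b) == inject_Z S)%Q -> a = 3*(S+b).
Proof.
  intros HQ.
  unfold Qeq, Qminus, Qplus, Qopp, Qdiv, Qmult, Qinv, inject_Z in HQ; simpl in HQ. lia.
Qed.


Theorem lemma4p2 (n : Z) (delta : Z) :
  0 <= n ->
  (delta = 1 \/ delta = 2) ->
  (exists B x y z : Z,
     0 <= B /\
     let S := x ^ 2 + 2 * y ^ 2 + 3 * delta * z ^ 2 + (x + 2 * y + 3 * delta * z) ^ 2 in
     ((inject_Z (2 * n + (3 * delta + 4) * B) / inject_Z 3
        - inject_Z ((3 * delta + 4) * B ^ 2)) == inject_Z S)%Q /\
     S < (B + 1) ^ 2) ->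
  exists w0 x0 y0 z0 : Z,
    0 <= w0 /\ 0 <= x0 /\ 0 <= y0 /\ 0 <= z0 /\
    n = p5 w0 + p5 x0 + 2 * p5 y0 + 3 * delta * p5 z0.
Proof.
  intros Hn Hd [B [x [y [z [HB [HQ HS]]]]]].
  cbv zeta in HQ, HS.
  apply qconv in HQ.
  assert (Hd0 : 0 <= 3 * delta) by lia.
  assert (P1 : 0 <= x ^ 2) by (rewrite Z.pow_2_r; apply Z.square_nonneg).
  assert (P2 : 0 <= y ^ 2) by (rewrite Z.pow_2_r; apply Z.square_nonneg).
  assert (P3 : 0 <= z ^ 2) by (rewrite Z.pow_2_r; apply Z.square_nonneg).
  assert (P4 : 0 <= (x + 2 * y + 3 * delta * z) ^ 2) by (rewrite Z.pow_2_r; apply Z.square_nonneg).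
  assert (P6 : 1 * z ^ 2 <= 3 * delta * z ^ 2) by (apply Z.mul_le_mono_nonneg_r; lia).
  exists (B + x), (B + -(x + 2 * y + 3 * delta * z)), (B + y), (B + z).
  repeat split.
  - apply bnd; lia.
  - apply bnd; [lia|]. replace ((- (x + 2 * y + 3 * delta * z)) ^ 2) with ((x + 2 * y + 3 * delta * z) ^ 2) by ring. lia.
  - apply bnd; lia.
  - apply bnd; lia.
  - apply (Z.mul_reg_l _ _ 2); [lia|].
    replace (2 * (p5 (B + x) + p5 (B + - (x + 2 * y + 3 * delta * z)) + 2 * p5 (B + y) +
      3 * delta * p5 (B + z))) with
      (2 * p5 (B + x) + 2 * p5 (B + - (x + 2 * y + 3 * delta * z)) + 2 * (2 * p5 (B + y)) +
      3 * delta * (2 * p5 (B + z))) by ring.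
    rewrite !p5_two.
    replace (2 * n) with (3 * (x ^ 2 + 2 * y ^ 2 + 3 * delta * z ^ 2 + (x + 2 * y + 3 * delta * z) ^ 2 +
      (3 * delta + 4) * B ^ 2) - (3 * delta + 4) * B) by lia.
    ring.
Qed.
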